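(* Let $X_1, X_2, \dots$ be i.i.d. random variables with $\mathbb{P}(X_1 = l) = p_l$ for $l \in \mathbb{Z}^+$. Fix integers $k \ge 1$, $0 \le j \le k$ and $i_0 \in \mathbb{Z}^+$. For $i \ge 1$ let $\xi_i$ be the indicator of the event that $X_{i+k} = i_0$ and exactly $j$ of $X_i, X_{i+1}, \dots, X_{i+k-1}$ are $\ge i_0$. Then: (1) for every $i \ge 1$, $\mathbb{E}(\xi_i) = \mathbb{P}(\xi_i = 1) = \binom{k}{j} S_{i_0}^j (1-S_{i_0})^{k-j} p_{i_0}$; (2) for every $i \ge 1$, $\mathbb{E}(\xi_i \xi_{i+1}) = \binom{k-1}{j-1} S_{i_0}^{j} (1-S_{i_0})^{k-j} p_{i_0}^2$; (3) for $i_1, i_2 \ge 1$ with $|i_1 - i_2| = m > k$, $\mathbb{P}(\xi_{i_1} = 1, \xi_{i_2} = 1) = \mathbb{P}(\xi_{i_1} = 1)\mathbb{P}(\xi_{i_2} = 1)$ and $\mathbb{E}(\xi_{i_1}\xi_{i_2}) = \mathbb{E}(\xi_{i_1})\mathbb{E}(\xi_{i_2})$; (4) for $i_1, i_2 \ge 1$ with $|i_1 - i_2| = m \in \{1, 2, \dots, k\}$, \[ \phi_m := \mathbb{E}(\xi_{i_1}\xi_{i_2}) = \sum_{t=\max\{0, j-m-1\}}^{\min\{k-m, j-1\}} \binom{m}{j-t}\binom{m-1}{j-t-1}\binom{k-m}{t} S_{i_0}^{2j-t-1} (1-S_{i_0})^{m-2j+t+k} p_{i_0}^2 . \]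
   Context: $S_{i_0} = \mathbb{P}(X_1 \ge i_0) = \sum_{s \ge i_0} p_s$. Binomial coefficients $\binom{a}{b}$ are taken to be $0$ when $b < 0$ or $b > a$, an empty sum is $0$, and $0^0 = 1$. *)

(* Defs.v *)
From HB Require Import structures.
From mathcomp Require Import all_boot all_order all_algebra.
From mathcomp Require Import all_classical all_reals all_analysis.
Set Implicit Arguments. Unset Strict Implicit. Unset Printing Implicit Defensive.
Import Order.TTheory GRing.Theory Num.Theory.
Local Open Scope classical_set_scope.
Local Open Scope ring_scope.

Definition binz (a b : int) : nat :=
  match a, b with
  | Posz a', Posz b' => 'C(a', b')
  | _, _ => 0%N
  end.

Definition Pr d (T : measurableType d) (R : realType) (P : probability T R)
  (A : set T) : R := fine (P A).

Definition mutually_independent d (T : measurableType d) (R : realType)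
  (P : probability T R) (X : nat -> T -> nat) : Prop :=
  forall (I : seq nat) (A : nat -> set nat),
    uniq I -> all (fun i => 0 < i)%N I ->
    Pr P (\bigcap_(i in [set` I]) (X i @^-1` A i))
    = \prod_(i <- I) Pr P (X i @^-1` A i).

Definition S_tail d (T : measurableType d) (R : realType) (P : probability T R)
  (X : nat -> T -> nat) (i0 : nat) : R :=
  Pr P [set w | (i0 <= X 1%N w)%N].

Definition xi_event (T : Type) (X : nat -> T -> nat) (k j i0 i : nat) : set T :=
  [set w | X (i + k)%N w = i0 /\
           count (fun l => i0 <= X l w)%N (iota i k) = j].

Definition xi (T : Type) (R : realType) (X : nat -> T -> nat) (k j i0 i : nat)
  : T -> R := fun w => (w \in xi_event X k j i0 i)%:R.

(* phi_m formula; t ranges over max{0,j-m-1} .. min{k-m,j-1}, i.e. the nat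
   interval [j - (m+1), min(k-m+1, j)) with truncated subtraction *)
Definition phi (R : realType) (k j m : nat) (S p : R) : R :=
  \sum_((j - m.+1)%N <= t < minn (k - m).+1 j)
    (binz m (j%:Z - t%:Z))%:R
    * (binz (m%:Z - 1) (j%:Z - t%:Z - 1))%:R
    * (binz (k%:Z - m%:Z) t)%:R
    * S ^ (2 * j%:Z - t%:Z - 1)
    * (1 - S) ^ (m%:Z - 2 * j%:Z + t%:Z + k%:Z)
    * p ^+ 2.

(* Main.v *)
Require Import Defs.
From HB Require Import structures.
From mathcomp Require Import all_boot all_order all_algebra.
From mathcomp Require Import all_classical all_reals all_analysis.
From mathcomp Require Import zify ring lra.
Import Order.TTheory GRing.Theory Num.Theory.
Local Open Scope classical_set_scope.
Local Open Scope ring_scope.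
Section Aux.
Variables (d : measure_display) (T : measurableType d) (R : realType)
  (P : probability T R) (X : nat -> T -> nat).
Hypothesis HXmeas : forall i n : nat, (0 < i)%N -> measurable (X i @^-1` [set n]).

Lemma meas_coords (L : seq nat) (Q : seq nat -> Prop) :
  all (fun i => 0 < i)%N L -> measurable [set w | Q (map (fun l => X l w) L)].
Proof.
elim: L Q => [|a L IH] Q /=.
  move=> _; case: (pselect (Q [::])) => HQ.
    suff -> : [set w : T | Q [::]] = setT by exact: measurableT.
    by apply: funext => w; apply: propext; split.
  suff -> : [set w : T | Q [::]] = set0 by exact: measurable0.
  by apply: funext => w; apply: propext; split.
move=> /andP[Ha HL].
have -> : [set w | Q (X a w :: map (fun l => X l w) L)] =
   \bigcup_n (X a @^-1` [set n] `&` [set w | Q (n :: map (fun l => X l w) L)]).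
  apply: funext => w; apply: propext; split => /=.
    by move=> Hw; exists (X a w).
  by case=> n _ [/= -> ].
apply: bigcupT_measurable => n; apply: measurableI; first exact: HXmeas.
exact: (IH (fun s => Q (n :: s))).
Qed.

Definition determined (L : seq nat) (E : set T) :=
  forall w w', (forall l, l \in L -> X l w = X l w') -> E w -> E w'.

Lemma meas_determined L E : all (fun i => 0 < i)%N L -> determined L E -> measurable E.
Proof.
move=> HL HE.
have -> : E = [set w | exists w', E w' /\ map (fun l => X l w') L = map (fun l => X l w) L].
  apply: funext => w; apply: propext; split => /= Ew; first by exists w.
  case: Ew => w1 [Ew1 /eq_in_map Hm]; exact: (HE w1).
exact: (@meas_coords L (fun s => exists w1, E w1 /\ map (fun l => X l w1) L = s) HL).
Qed.

Lemma meas_pre i (A : set nat) : (0 < i)%N -> measurable (X i @^-1` A).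
Proof.
move=> Hi; apply: (@meas_determined [:: i]); first by rewrite /= Hi.
by move=> w w' H; rewrite /preimage /= H // mem_seq1.
Qed.

Lemma PrU A B : measurable A -> measurable B -> A `&` B = set0 ->
  Pr P (A `|` B) = Pr P A + Pr P B.
Proof. by move=> mA mB AB; rewrite /Pr measureU // fineD //; exact: fin_num_measure. Qed.

Lemma Pr0 : Pr P set0 = 0.
Proof. by rewrite /Pr measure0. Qed.

Lemma PrT : Pr P setT = 1.
Proof. by rewrite /Pr probability_setT. Qed.


Lemma perm_mid (s t : seq nat) a : perm_eq (s ++ a :: t) (a :: s ++ t).
Proof. by apply/permPl; exact: (perm_catCA s [:: a] t). Qed.

Variable p : nat -> R.
Variable i0 : nat.
Hypothesis Hindep : mutually_independent P X.
Hypothesis Hdist : forall i l : nat, (0 < i)%N -> Pr P (X i @^-1` [set l]) = p l.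

Lemma PrLt n a : (0 < a)%N -> Pr P (X a @^-1` [set x | (x < n)%N]) = \sum_(l < n) p l.
Proof.
move=> Ha; elim: n => [|n IH].
  rewrite big_ord0 -Pr0; congr Pr; apply: funext => w; apply: propext; split => //=.
rewrite big_ord_recr /= -IH -(Hdist a n Ha) -PrU; try exact: meas_pre.
  congr Pr; apply: funext => w; apply: propext; rewrite /preimage /=; split.
    by rewrite ltnS leq_eqVlt => /orP[/eqP ->|->]; [right|left].
  by case=> [H | ->]; rewrite ltnS // ltnW.
apply: funext => w; apply: propext; rewrite /preimage /=; split => // [[H1 H2]].
by rewrite H2 ltnn in H1.
Qed.

Definition S0 := S_tail P X i0.

Lemma PrGe a : (0 < a)%N -> Pr P (X a @^-1` [set x | (i0 <= x)%N]) = S0.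
Proof.
have H b : (0 < b)%N -> Pr P (X b @^-1` [set x | (i0 <= x)%N]) = 1 - \sum_(l < i0) p l.
  move=> Hb; rewrite -(PrLt i0 b Hb) -PrT.
  have -> : [set: T] = X b @^-1` [set x | (x < i0)%N] `|` X b @^-1` [set x | (i0 <= x)%N].
    apply: funext => w; apply: propext; rewrite /preimage /=; split => // _.
    by case: (ltnP (X b w) i0) => H; [left|right].
  rewrite PrU; try exact: meas_pre.
    by rewrite addrAC subrr add0r.
  apply: funext => w; apply: propext; rewrite /preimage /=; split => // [[H1 H2]].
  by move: (leq_trans H1 H2); rewrite ltnn.
by move=> Ha; rewrite (H a Ha) /S0 /S_tail -(H 1%N).
Qed.

Lemma PrLtS a : (0 < a)%N -> Pr P (X a @^-1` [set x | (x < i0)%N]) = 1 - S0.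
Proof.
move=> Ha; rewrite -(PrGe a Ha) -PrT.
have -> : [set: T] = X a @^-1` [set x | (x < i0)%N] `|` X a @^-1` [set x | (i0 <= x)%N].
  apply: funext => w; apply: propext; rewrite /preimage /=; split => // _.
  by case: (ltnP (X a w) i0) => H; [left|right].
rewrite PrU; try exact: meas_pre.
  by rewrite addrK.
apply: funext => w; apply: propext; rewrite /preimage /=; split => // [[H1 H2]].
by move: (leq_trans H1 H2); rewrite ltnn.
Qed.


Definition upd (A : nat -> set nat) (a : nat) (B : set nat) : nat -> set nat :=
  fun l => if l == a then B else A l.

Definition ev (Ls : seq (seq nat * nat)) (K : seq nat) (A : nat -> set nat) : set T :=
  [set w | all (fun Lc => count (fun l => i0 <= X l w)%N Lc.1 == Lc.2) Ls /\
           (forall l, l \in K -> A l (X l w))].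

Definition bt (n c : nat) : R := ('C(n, c))%:R * S0 ^+ c * (1 - S0) ^+ (n - c).

Lemma ev_determined Ls K A : determined (flatten (map fst Ls) ++ K) (ev Ls K A).
Proof.
move=> w w' H [Hall HK]; split.
  apply/allP => Lc HLc; move/allP: Hall => /(_ Lc HLc) /eqP <-; apply/eqP.
  apply: eq_in_count => l Hl; rewrite H // mem_cat; apply/orP; left.
  by apply/flattenP; exists Lc.1 => //; apply: map_f.
by move=> l Hl; rewrite -H ?mem_cat ?Hl ?orbT //; exact: HK.
Qed.

Lemma ev_meas Ls K A : all (fun i => 0 < i)%N (flatten (map fst Ls) ++ K) ->
  measurable (ev Ls K A).
Proof. by move=> Hp; apply: meas_determined Hp (ev_determined Ls K A). Qed.

Lemma bt00 : bt 0 0 = 1.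
Proof. by rewrite /bt bin0 !expr0 !mulr1. Qed.

Lemma bt0S c : bt 0 c.+1 = 0.
Proof. by rewrite /bt bin0n /= !mul0r. Qed.

Lemma btS0 n : bt n.+1 0 = (1 - S0) * bt n 0.
Proof. by rewrite /bt !bin0 !subn0 exprS; ring. Qed.

Lemma btSS n c : bt n.+1 c.+1 = S0 * bt n c + (1 - S0) * bt n c.+1.
Proof.
rewrite /bt binS natrD subSS.
case: (ltnP c n) => Hc.
  have -> : (n - c = (n - c.+1).+1)%N by lia.
  rewrite !exprS; ring.
rewrite (@bin_small n c.+1) ?ltnS //.
have -> : (n - c = 0)%N by lia.
have -> : (n - c.+1 = 0)%N by lia.
rewrite !exprS; ring.
Qed.

Lemma Pr_ev Ls K A :
  uniq (flatten (map fst Ls) ++ K) -> all (fun i => 0 < i)%N (flatten (map fst Ls) ++ K) ->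
  Pr P (ev Ls K A) = \prod_(Lc <- Ls) bt (size Lc.1) Lc.2 * \prod_(l <- K) Pr P (X l @^-1` A l).
Proof.
elim: Ls K A => [|[L c] Ls IH] K A.
  move=> /= Hu Hp; rewrite big_nil mul1r -Hindep //.
  congr Pr; apply: funext => w; apply: propext; split => /=.
    by case=> _ HK l Hl; exact: HK.
  by move=> HK; split => // l Hl; exact: HK.
elim: L c K A => [|a L IHL] c K A.
  move=> /= Hu Hp.
  case: c => [|c].
    by rewrite big_cons /= bt00 mul1r -IH.
  rewrite big_cons /= bt0S !mul0r.
  suff -> : ev (([::], c.+1) :: Ls) K A = set0 by rewrite Pr0.
  apply: funext => w; apply: propext.
  by rewrite /ev /=; split => // [[]].
move=> Hu Hp.
set F := flatten (map fst Ls).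
have Hu2 : uniq ((L ++ F) ++ a :: K) by rewrite (perm_uniq (perm_mid _ _ _)).
have Hp2 : all (fun i => 0 < i)%N ((L ++ F) ++ a :: K).
  by rewrite (perm_all _ (perm_mid _ _ _)).
have Ha : (0 < a)%N by move: Hp => /= /andP[].
have HaK : a \notin K by move: Hu => /= /andP[Hn _]; move: Hn; rewrite !mem_cat !negb_or => /andP[_ ->].
have HprodK B : \prod_(l <- K) Pr P (X l @^-1` upd A a B l) = \prod_(l <- K) Pr P (X l @^-1` A l).
  apply: eq_big_seq => l Hl; rewrite /upd; case: eqP => // Hla.
  by rewrite -Hla Hl in HaK.
clear Hu Hp.
case: c => [|c].
  have -> : ev ((a :: L, 0%N) :: Ls) K A = ev ((L, 0%N) :: Ls) (a :: K) (upd A a [set n | (n < i0)%N]).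
    apply: funext => w; apply: propext; rewrite /ev /upd /=; split.
      case=> /andP[Hc Hall] HK.
      move: Hc; rewrite addn_eq0 eqb0 => /andP[Ha' Hc]; split; first by rewrite Hc Hall.
      move=> l; rewrite inE; case: eqP => [-> _|_ /= Hl]; [by rewrite /= ltnNge | exact: HK].
    case=> /andP[Hc Hall] HK; split.
      have := HK a; rewrite inE eqxx /= => /(_ isT) /=; rewrite ltnNge => Ha'.
      by rewrite (negbTE Ha') add0n Hc Hall.
    move=> l Hl; have := HK l; rewrite inE Hl orbT => /(_ isT).
    by case: eqP => // Hla; rewrite -Hla Hl in HaK.
  rewrite (IHL 0%N (a :: K) _ Hu2 Hp2) !big_cons /= HprodK /upd eqxx PrLtS // btS0.
  ring.
have Heq : ev ((a :: L, c.+1) :: Ls) K A =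
    ev ((L, c) :: Ls) (a :: K) (upd A a [set n | (i0 <= n)%N]) `|`
    ev ((L, c.+1) :: Ls) (a :: K) (upd A a [set n | (n < i0)%N]).
  apply: funext => w; apply: propext; rewrite /ev /upd /=; split.
    case=> /andP[Hc Hall] HK.
    case: (leqP i0 (X a w)) => Ha'.
      left; split; first by move: Hc; rewrite Ha' add1n eqSS => ->.
      move=> l; rewrite inE; case: eqP => [-> _ //| _ /= Hl]; exact: HK.
    right; split; first by move: Hc; rewrite leqNgt Ha' /= add0n => ->.
    move=> l; rewrite inE; case: eqP => [-> _ //| _ /= Hl]; exact: HK.
  case=> [[/andP[Hc Hall] HK]|[/andP[Hc Hall] HK]]; split.
  - have := HK a; rewrite inE eqxx => /(_ isT) /= Ha'.
    by rewrite Ha' add1n eqSS Hc Hall.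
  - move=> l Hl; have := HK l; rewrite inE Hl orbT => /(_ isT).
    by case: eqP => // Hla; rewrite -Hla Hl in HaK.
  - have := HK a; rewrite inE eqxx => /(_ isT) /=; rewrite ltnNge => Ha'.
    by rewrite (negbTE Ha') add0n Hc Hall.
  - move=> l Hl; have := HK l; rewrite inE Hl orbT => /(_ isT).
    by case: eqP => // Hla; rewrite -Hla Hl in HaK.
rewrite Heq PrU; first last.
- apply: funext => w; apply: propext; split => // [[[/andP[Hc1 _] _] [/andP[Hc2 _] _]]].
  by move/eqP: Hc1 => E1; move/eqP: Hc2; rewrite E1 => /n_Sn.
- exact: ev_meas.
- exact: ev_meas.
rewrite (IHL c (a :: K) _ Hu2 Hp2) (IHL c.+1 (a :: K) _ Hu2 Hp2) !big_cons /= !HprodK.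
rewrite /upd eqxx PrLtS // PrGe // btSS.
ring.
Qed.


Lemma iotaS_r a n : iota a n.+1 = iota a n ++ [:: a + n].
Proof. by rewrite -[n.+1]addn1 iotaD. Qed.

Lemma uniq_catI (s t : seq nat) : uniq s -> uniq t ->
  (forall x, x \in s -> x \in t -> False) -> uniq (s ++ t).
Proof.
move=> Hs Ht H; rewrite cat_uniq Hs Ht andbT /=; apply/hasPn => x Hx; apply/negP => Hs'.
exact: H x Hs' Hx.
Qed.

Lemma int_ind (E : set T) : measurable E ->
  (\int[P]_w ((w \in E)%:R : R)%:E)%E = (Pr P E)%:E.
Proof.
move=> mE; rewrite /Pr fineK; last exact: fin_num_measure.
rewrite -[in RHS](setIT E); exact: integral_indic.
Qed.

Lemma int_ind2 (E1 E2 : set T) : measurable (E1 `&` E2) ->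
  (\int[P]_w (((w \in E1)%:R : R) * (w \in E2)%:R)%:E)%E = (Pr P (E1 `&` E2))%:E.
Proof.
move=> mE; rewrite -int_ind //; apply: eq_integral => w _; congr (_%:E).
rewrite in_setI; case: (w \in E1); case: (w \in E2);
  by rewrite /= ?mulr1n ?mulr0n ?mulr1 ?mul1r ?mulr0 ?mul0r.
Qed.

Lemma xi1 k j i : [set w | xi R X k j i0 i w = 1] = xi_event X k j i0 i.
Proof.
apply: funext => w; apply: propext; rewrite /xi /=; split.
  case: (boolP (w \in xi_event X k j i0 i)) => H; first by rewrite in_setE in H.
  by move=> /eqP; rewrite /= mulr0n eq_sym oner_eq0.
by move=> H; rewrite mem_set.
Qed.

Lemma xi_determined k j i : determined (iota i k.+1) (xi_event X k j i0 i).
Proof.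
move=> w w' H [H1 H2]; split.
  by rewrite -H // mem_iota; apply/andP; split; [exact: leq_addr | rewrite ltn_add2l].
rewrite -H2; apply: eq_in_count => l Hl; rewrite H //.
by move: Hl; rewrite !mem_iota => /andP[-> Hl] /=; rewrite addnS ltnS ltnW.
Qed.

Lemma xi_meas k j i : (0 < i)%N -> measurable (xi_event X k j i0 i).
Proof.
move=> Hi; apply: meas_determined (xi_determined k j i).
by apply/allP => x; rewrite mem_iota; lia.
Qed.

Lemma Pr_xi k j i : (0 < i)%N -> Pr P (xi_event X k j i0 i) = bt k j * p i0.
Proof.
move=> Hi.
have -> : xi_event X k j i0 i = ev [:: (iota i k, j)] [:: i + k] (fun _ => [set i0]).
  apply: funext => w; apply: propext; rewrite /ev /xi_event /=; split.
    by case=> H1 H2; split; [rewrite H2 eqxx | move=> l; rewrite inE => /eqP ->].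
  by case=> /andP[/eqP H2 _] H1; split => //; apply: H1; rewrite inE.
rewrite Pr_ev.
- by rewrite big_seq1 /= size_iota big_seq1 Hdist ?addn_gt0 ?Hi.
- rewrite /= cats0; apply: uniq_catI; [exact: iota_uniq | by [] |].
  by move=> x; rewrite mem_iota inE; lia.
- by apply/allP => x; rewrite /= cats0 mem_cat mem_iota inE; lia.
Qed.

Lemma Pr_xi2 k j i : (0 < i)%N ->
  Pr P (xi_event X k.+1 j.+1 i0 i `&` xi_event X k.+1 j.+1 i0 i.+1)
  = bt k j * S0 * p i0 ^+ 2.
Proof.
move=> Hi.
have E1 : (i + k.+1 == i) = false by lia.
have E2 : (i.+1 + k.+1 == i) = false by lia.
have -> : xi_event X k.+1 j.+1 i0 i `&` xi_event X k.+1 j.+1 i0 i.+1 =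
   ev [:: (iota i.+1 k, j)] [:: i; i + k.+1; i.+1 + k.+1]
      (upd (fun _ => [set i0]) i [set n | (i0 <= n)%N]).
  have Ei : i.+1 + k = i + k.+1 by lia.
  apply: funext => w; apply: propext; rewrite /ev /xi_event /upd (iotaS_r i.+1 k) /=.
  rewrite count_cat /= addn0 Ei.
  split.
    case=> [[H1 Hc1] [H2 Hc2]]; rewrite H1 leqnn in Hc2.
    split; first by apply/andP; split => //; apply/eqP; lia.
    move=> l; rewrite !inE => /or3P[] /eqP ->; rewrite ?eqxx ?E1 ?E2 //=; lia.
  case=> /andP[/eqP Hc _] HK.
  have Ha := HK i; rewrite !inE eqxx /= in Ha; have {}Ha := Ha isT.
  have Hb := HK (i + k.+1); rewrite !inE eqxx orbT E1 /= in Hb; have {}Hb := Hb isT.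
  have Hc' := HK (i.+1 + k.+1); rewrite !inE eqxx !orbT E2 /= in Hc'; have {}Hc' := Hc' isT.
  by rewrite Hb leqnn; split; split => //; lia.
rewrite Pr_ev.
- rewrite big_seq1 /= size_iota !big_cons big_nil /upd eqxx E1 E2 PrGe // !Hdist; try lia.
  by rewrite expr2; ring.
- rewrite /= cats0; apply: uniq_catI; [exact: iota_uniq | rewrite /= !inE; lia |].
  by move=> x; rewrite mem_iota !inE; lia.
- by apply/allP => x; rewrite /= cats0 mem_cat mem_iota !inE; lia.
Qed.

Lemma Pr_xi2_0 k i : xi_event X k.+1 0 i0 i `&` xi_event X k.+1 0 i0 i.+1 = set0.
Proof.
apply: funext => w; apply: propext; rewrite /xi_event (iotaS_r i.+1 k) /=.
split => // [[[H1 _] [_ Hc2]]].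
move: Hc2; rewrite count_cat /= addn0 (_ : i.+1 + k = i + k.+1); last by lia.
by rewrite H1 leqnn addn1.
Qed.

Lemma Pr_xi3 k j i1 i2 : (0 < i1)%N -> (i1 + k < i2)%N ->
  Pr P (xi_event X k j i0 i1 `&` xi_event X k j i0 i2) = (bt k j * p i0) * (bt k j * p i0).
Proof.
move=> Hi1 Hi2.
have -> : xi_event X k j i0 i1 `&` xi_event X k j i0 i2 =
   ev [:: (iota i1 k, j); (iota i2 k, j)] [:: i1 + k; i2 + k] (fun _ => [set i0]).
  apply: funext => w; apply: propext; rewrite /ev /xi_event /=; split.
    case=> [[H1 Hc1] [H2 Hc2]]; rewrite Hc1 Hc2 !eqxx; split => //.
    by move=> l; rewrite !inE => /orP[] /eqP ->.
  case=> /and3P[/eqP Hc1 /eqP Hc2 _] HK.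
  by split; split => //; apply: HK; rewrite !inE eqxx ?orbT.
rewrite Pr_ev.
- rewrite !big_cons !big_nil /= !size_iota !Hdist; try lia.
  by ring.
- rewrite /= cats0; apply: uniq_catI; [apply: uniq_catI; rewrite ?iota_uniq // | rewrite /= !inE; lia |].
    by move=> x; rewrite !mem_iota; lia.
  by move=> x; rewrite mem_cat !mem_iota !inE; lia.
- by apply/allP => x; rewrite /= cats0 !mem_cat !mem_iota !inE; lia.
Qed.


Lemma Pr_partition (E : set T) (f : T -> nat) N :
  (forall n, measurable (E `&` [set w | (f w < n)%N])) ->
  (forall n, measurable (E `&` [set w | f w = n])) ->
  (forall w, E w -> (f w < N)%N) ->
  Pr P E = \sum_(t < N) Pr P (E `&` [set w | f w = t]).
Proof.
move=> mlt meq HN.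
have Hc n : Pr P (E `&` [set w | (f w < n)%N]) = \sum_(t < n) Pr P (E `&` [set w | f w = t]).
  elim: n => [|n IH].
    suff -> : E `&` [set w | (f w < 0)%N] = set0 by rewrite big_ord0 Pr0.
    by apply: funext => w; apply: propext; split => //; case=> _ /=; rewrite ltn0.
  rewrite big_ord_recr /= -IH.
  rewrite (_ : E `&` [set w | (f w < n.+1)%N] =
     (E `&` [set w | (f w < n)%N]) `|` (E `&` [set w | f w = n])); last first.
    apply: funext => w; apply: propext; rewrite /=; split.
      by case=> Ew; rewrite ltnS leq_eqVlt => /orP[/eqP ->|H]; [right|left].
    by case=> [[Ew H]|[Ew ->]]; split => //; rewrite ltnS ?leqnn // ltnW.
  rewrite PrU //.
  apply: funext => w; apply: propext; split => // [[[_ H1] [_ H2]]].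
  by move: H1 H2 => /= H1 H2; rewrite H2 ltnn in H1.
rewrite -Hc; congr (Pr P _).
apply: funext => w; apply: propext; split => [Ew|[]//]; split => //; exact: HN.
Qed.

Lemma det_count L (Q : nat -> Prop) :
  determined L [set w | Q (count (fun l => i0 <= X l w)%N L)].
Proof.
move=> w w' H /=.
suff -> : count (fun l => i0 <= X l w')%N L = count (fun l => i0 <= X l w)%N L by [].
by apply: eq_in_count => l Hl; rewrite H.
Qed.

Lemma detI L1 L2 E1 E2 : determined L1 E1 -> determined L2 E2 ->
  determined (L1 ++ L2) (E1 `&` E2).
Proof.
move=> H1 H2 w w' H [e1 e2]; split.
  by apply: (H1 w) e1 => l Hl; apply: H; rewrite mem_cat Hl.
by apply: (H2 w) e2 => l Hl; apply: H; rewrite mem_cat Hl orbT.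
Qed.

Ltac mem_simp := repeat progress rewrite ?mem_cat ?mem_iota ?inE.

Ltac solve_uniq := repeat first [ done | exact: iota_uniq | apply: uniq_catI |
  (rewrite cons_uniq; apply/andP; split) | (apply/andP; split) |
  (move=> ?; mem_simp; lia) |
  (mem_simp; rewrite /=; lia) ].

Lemma Pr_xi4 j i1 m r : (0 < i1)%N ->
  Pr P (xi_event X (m.+1 + r)%N j i0 i1 `&` xi_event X (m.+1 + r)%N j i0 (i1 + m.+1)%N)
  = \sum_(t < r.+1) (if (t < j)%N then
       bt m.+1 (j - t)%N * bt r t * bt m (j - t)%N.-1 * p i0 ^+ 2 else 0).
Proof.
move=> Hi1.
set E := _ `&` _.
have e1 : (i1 + (m.+1 + r) = i1 + m.+1 + r)%N by rewrite addnA.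
have eA : iota i1 (m.+1 + r) = iota i1 m.+1 ++ iota (i1 + m.+1) r by rewrite iotaD.
have eB : iota (i1 + m.+1) (m.+1 + r) =
    iota (i1 + m.+1) r ++ (i1 + m.+1 + r)%N :: iota (i1 + m.+1 + r).+1 m.
  by rewrite (addnC m.+1 r) iotaD.
rewrite (@Pr_partition E (fun w => count (fun l => i0 <= X l w)%N (iota (i1 + m.+1) r)) r.+1).
- apply: eq_bigr => [[t Ht]] _ /=.
  case: ifP => Htj.
  + have -> : E `&` [set w | count (fun l => i0 <= X l w)%N (iota (i1 + m.+1) r) = t] =
        ev [:: (iota i1 m.+1, (j - t)%N); (iota (i1 + m.+1) r, t); (iota (i1 + m.+1 + r).+1 m, (j - t)%N.-1)]
           [:: (i1 + m.+1 + r)%N; (i1 + m.+1 + (m.+1 + r))%N] (fun _ => [set i0]).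
      apply: funext => w; apply: propext.
      rewrite /E /ev /xi_event e1 eA eB /= !count_cat /=.
      split.
        move=> [[[H1 Hc1] [H2 Hc2]] Hb]; rewrite H1 leqnn /= in Hc2.
        split; first by rewrite !andbT; apply/and3P; split; apply/eqP; lia.
        by move=> l; rewrite !inE => /orP[] /eqP ->.
      case=> /and4P[/eqP Ha /eqP Hb /eqP Hc _] HK.
      have H1 := HK (i1 + m.+1 + r)%N; rewrite !inE eqxx /= in H1; have {}H1 := H1 isT.
      have H2 := HK (i1 + m.+1 + (m.+1 + r))%N; rewrite !inE eqxx orbT /= in H2.
      have {}H2 := H2 isT.
      rewrite H1 leqnn; split; [split; split|] => //; lia.
    rewrite Pr_ev.
    * rewrite !big_cons !big_nil /= !size_iota !Hdist; try lia.
      by rewrite expr2; ring.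
    * by rewrite /= cats0; solve_uniq.
    * by apply/allP => x; rewrite /= ?cats0; mem_simp; lia.
  + suff -> : E `&` [set w | count (fun l => i0 <= X l w)%N (iota (i1 + m.+1) r) = t] = set0.
      by rewrite Pr0.
    apply: funext => w; apply: propext.
    rewrite /E /xi_event e1 eA eB /= !count_cat /=.
    split => // [[[[H1 Hc1] [H2 Hc2]] Hb]]; rewrite H1 leqnn /= in Hc2.
    lia.
- move=> n; apply: (meas_determined _ _ _ (detI _ _ _ _ (detI _ _ _ _ (xi_determined (m.+1 + r)%N j i1)
    (xi_determined (m.+1 + r)%N j (i1 + m.+1)%N)) (det_count (iota (i1 + m.+1)%N r) (fun c => (c < n)%N)))).
  by apply/allP => x; mem_simp; lia.
- move=> n; apply: (meas_determined _ _ _ (detI _ _ _ _ (detI _ _ _ _ (xi_determined (m.+1 + r)%N j i1)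
    (xi_determined (m.+1 + r)%N j (i1 + m.+1)%N)) (det_count (iota (i1 + m.+1)%N r) (fun c => c = n)))).
  by apply/allP => x; mem_simp; lia.
- move=> w _; rewrite ltnS; apply: leq_trans (count_size _ _) _; by rewrite size_iota.
Qed.

End Aux.

Lemma binz_neg (a b : int) : (b < 0)%R -> binz a b = 0%N.
Proof. by case: b => [b|b] H; [exfalso; lia | case: a]. Qed.

Lemma sum_restrict (R : realType) (F : nat -> R) lo hi N : (lo <= hi <= N)%N ->
  (forall t, (t < lo)%N -> F t = 0) -> (forall t, (hi <= t < N)%N -> F t = 0) ->
  \sum_(0 <= t < N) F t = \sum_(lo <= t < hi) F t.
Proof.
move=> /andP[H1 H2] Z1 Z2.
rewrite (@big_cat_nat _ _ _ lo) //=; last exact: leq_trans H2.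
rewrite (@big_cat_nat _ _ _ hi lo N) //=.
have -> : \sum_(0 <= t < lo) F t = 0.
  by rewrite big_nat_cond big1 // => t /andP[/andP[_ Ht] _]; exact: Z1.
have -> : \sum_(hi <= t < N) F t = 0.
  by rewrite big_nat_cond big1 // => t /andP[Ht _]; exact: Z2.
by rewrite add0r addr0.
Qed.

Theorem theorem4 (d : measure_display) (T : measurableType d) (R : realType)
  (P : probability T R) (X : nat -> T -> nat) (p : nat -> R)
  (HXmeas : forall i n : nat, (0 < i)%N -> measurable (X i @^-1` [set n]))
  (Hindep : mutually_independent P X)
  (Hp0 : p 0%N = 0)
  (Hdist : forall i l : nat, (0 < i)%N -> Pr P (X i @^-1` [set l]) = p l)
  (k j i0 : nat) (Hk : (1 <= k)%N) (Hj : (j <= k)%N) (Hi0 : (1 <= i0)%N) :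
  let S := S_tail P X i0 in
  (forall i : nat, (1 <= i)%N ->
     ((\int[P]_w (xi R X k j i0 i w)%:E)%E = (Pr P [set w | xi R X k j i0 i w = 1])%:E)
     /\ Pr P [set w | xi R X k j i0 i w = 1]
        = (binz k j)%:R * S ^+ j * (1 - S) ^+ (k - j) * p i0) /\
  (forall i : nat, (1 <= i)%N ->
     (\int[P]_w (xi R X k j i0 i w * xi R X k j i0 i.+1 w)%:E)%E
     = ((binz (k%:Z - 1) (j%:Z - 1))%:R * S ^+ j * (1 - S) ^+ (k - j)
         * p i0 ^+ 2)%:E) /\
  (forall i1 i2 m : nat, (1 <= i1)%N -> (1 <= i2)%N ->
     (maxn i1 i2 - minn i1 i2)%N = m -> (k < m)%N ->
     Pr P [set w | xi R X k j i0 i1 w = 1 /\ xi R X k j i0 i2 w = 1]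
       = Pr P [set w | xi R X k j i0 i1 w = 1] * Pr P [set w | xi R X k j i0 i2 w = 1]
     /\ (\int[P]_w (xi R X k j i0 i1 w * xi R X k j i0 i2 w)%:E)%E
        = ((\int[P]_w (xi R X k j i0 i1 w)%:E) * (\int[P]_w (xi R X k j i0 i2 w)%:E))%E) /\
  (forall i1 i2 m : nat, (1 <= i1)%N -> (1 <= i2)%N ->
     (maxn i1 i2 - minn i1 i2)%N = m -> (1 <= m <= k)%N ->
     (\int[P]_w (xi R X k j i0 i1 w * xi R X k j i0 i2 w)%:E)%E
     = (phi k j m S (p i0))%:E).
Proof.
move=> S.
have PX := Pr_xi d T R P X HXmeas p i0 Hindep Hdist.
have PX2 := Pr_xi2 d T R P X HXmeas p i0 Hindep Hdist.
have PX3 := Pr_xi3 d T R P X HXmeas p i0 Hindep Hdist.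
have PX4 := Pr_xi4 d T R P X HXmeas p i0 Hindep Hdist.
have XM := xi_meas d T X HXmeas i0.
have Exi i : (0 < i)%N ->
    (\int[P]_w (xi R X k j i0 i w)%:E)%E = (Pr P (xi_event X k j i0 i))%:E.
  by move=> Hi; exact: (int_ind d T R P _ (XM k j i Hi)).
have Exi2 i1 i2 : (0 < i1)%N -> (0 < i2)%N ->
    (\int[P]_w (xi R X k j i0 i1 w * xi R X k j i0 i2 w)%:E)%E
    = (Pr P (xi_event X k j i0 i1 `&` xi_event X k j i0 i2))%:E.
  by move=> H1 H2; apply: int_ind2; apply: measurableI; exact: XM.
split.
  move=> i Hi; rewrite xi1 Exi //; split => //.
  by rewrite PX.
split.
  move=> i Hi; rewrite Exi2 //; congr (_%:E).
  destruct k as [|k']; first by [].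
  destruct j as [|j'].
    rewrite Pr_xi2_0 /Pr measure0 binz_neg; last by lia.
    by rewrite mulr0n !mul0r.
  rewrite PX2 // (_ : (k'.+1%:Z - 1)%R = k'%:Z); last by lia.
  rewrite (_ : (j'.+1%:Z - 1)%R = j'%:Z); last by lia.
  rewrite /binz /bt /S0 /S subSS (exprS (S_tail P X i0)); ring.
split.
  move=> i1 i2 m' H1 H2 Hm Hkm.
  have HP : Pr P (xi_event X k j i0 i1 `&` xi_event X k j i0 i2)
      = Pr P (xi_event X k j i0 i1) * Pr P (xi_event X k j i0 i2).
    case: (ltngtP i1 i2) => Hc.
    - rewrite PX3 ?PX //; lia.
    - rewrite setIC mulrC PX3 ?PX //; lia.
    - subst; lia.
  rewrite (_ : [set w | xi R X k j i0 i1 w = 1 /\ xi R X k j i0 i2 w = 1]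
     = xi_event X k j i0 i1 `&` xi_event X k j i0 i2); last by rewrite -!(xi1 d T R X).
  rewrite !xi1; split; first exact: HP.
  by rewrite Exi2 // !Exi // HP EFinM.
move=> i1 i2 m' H1 H2 Hm /andP[Hm1 Hmk].
rewrite Exi2 //; congr (_%:E).
have key a : (0 < a)%N ->
    Pr P (xi_event X k j i0 a `&` xi_event X k j i0 (a + m')%N) = phi k j m' S (p i0).
  move=> Ha.
  have [m [r [em ek]]] : exists m r, m' = m.+1 /\ k = (m.+1 + r)%N.
    by exists m'.-1, (k - m')%N; lia.
  rewrite em ek.
  rewrite PX4 //.
  pose G := fun t : nat => if (t < j)%N then bt d T R P X i0 m.+1 (j - t)%N *
     bt d T R P X i0 r t * bt d T R P X i0 m (j - t)%N.-1 * p i0 ^+ 2 else 0.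
  transitivity (\sum_(0 <= t < r.+1) G t); first by rewrite big_mkord.
  rewrite /phi /G.
  rewrite (_ : (m.+1 + r - m.+1)%N = r); last by rewrite addKn.
  rewrite -(@sum_restrict _ _ (j - m.+2) (minn r.+1 j) r.+1); first last.
  - move=> t /andP[Ht1 Ht2].
    rewrite (binz_neg _ (j%:Z - t%:Z - 1)); last by lia.
    by rewrite mulr0n mulr0 !mul0r.
  - move=> t Ht.
    rewrite (_ : (j%:Z - t%:Z)%R = (j - t)%N%:Z); last by lia.
    by rewrite /binz bin_small ?mulr0n ?mul0r //; lia.
  - apply/andP; split; lia.
  apply: eq_big_nat => t /andP[_ Ht].
  case: ifP => Htj.
    rewrite (_ : (j%:Z - t%:Z)%R = (j - t)%N%:Z); last by lia.
    case: (ltnP m.+1 (j - t)) => Hmt.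
      by rewrite /binz /bt bin_small // ?mulr0n !mul0r.
    rewrite (_ : ((j - t)%N%:Z - 1)%R = (j - t).-1%:Z); last by lia.
    rewrite (_ : (m.+1%:Z - 1)%R = m%:Z); last by lia.
    rewrite (_ : ((m.+1 + r)%N%:Z - m.+1%:Z)%R = r%:Z); last by lia.
    rewrite (_ : (2 * j%:Z - t%:Z - 1)%R = ((j - t) + t + (j - t).-1)%N%:Z); last by lia.
    rewrite (_ : (m.+1%:Z - 2 * j%:Z + t%:Z + (m.+1 + r)%N%:Z)%R
        = ((m.+1 - (j - t)) + (r - t) + (m - (j - t).-1))%N%:Z); last by lia.
    rewrite -!exprnP !exprD /binz /bt /S0 /S.
    ring.
  rewrite (binz_neg _ (j%:Z - t%:Z - 1)); last by lia.
  by rewrite mulr0n mulr0 !mul0r.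
case: (ltngtP i1 i2) => Hc.
- by rewrite (_ : i2 = (i1 + m')%N); [exact: key | lia].
- by rewrite setIC (_ : i1 = (i2 + m')%N); [exact: key | lia].
- by subst; lia.
Qed.
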